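(* Consider $n=\sum_{i=1}^L n_i$ component lifetimes $T_j^{(i)}$, $j=1,\dots,n_i$, $i=1,\dots,L$ ($L\ge1$), where components of type $i$ have common reliability function $\bar F_i$, the lifetimes within each type are exchangeable, and the joint reliability function is given by a survival copula $\hat C$: $$P(T_j^{(i)}>t_j^{(i)},\ j=1,\dots,n_i,\ i=1,\dots,L)=\hat C\big(\bar F_1(t_1^{(1)}),\dots,\bar F_1(t_{n_1}^{(1)}),\dots,\bar F_L(t_1^{(L)}),\dots,\bar F_L(t_{n_L}^{(L)})\big).$$ Fix $i\in\{1,\dots,L\}$, integers $0\le m_k\le n_k$ for $k\ne i$ and $0\le m_i\le n_i-1$, $t\ge 0$ and $\delta>0$, and define $$A_{\mathbf{m}}^{(i)}(t,\delta)=P\Big(T_1^{(k)}>t,\dots,T_{m_k}^{(k)}>t,\ T_{m_k+1}^{(k)}\le t,\dots,T_{n_k}^{(k)}\le t \text{ for all } k\neq i;\ t<T_1^{(i)}\le t+\delta,\ T_2^{(i)}>t,\dots,T_{m_i+1}^{(i)}>t,\ T_{m_i+2}^{(i)}\le t,\dots,T_{n_i}^{(i)}\le t\Big).$$ Then $$A_{\mathbf{m}}^{(i)}(t, \delta)=\sum_{j_1=0}^{n_1-m_1}\cdots\sum_{j_i=0}^{n_i-m_i-1}\cdots\sum_{j_L=0}^{n_L-m_L}(-1)^{j_1+\cdots + j_L}\binom{n_1-m_1}{j_1}\cdots \binom{n_i-m_i-1}{j_i}\cdots\binom{n_L-m_L}{j_L}\Big[\hat{C}(\underbrace{\bar{F}_1(t)}_{m_1+j_1},\underbrace{1}_{n_1-(m_1+j_1)},\dots,\underbrace{\bar{F}_i(t)}_{m_i+j_i+1},\underbrace{1}_{n_i-(m_i+j_i+1)},\dots,\underbrace{\bar{F}_L(t)}_{m_L+j_L},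 \underbrace{1}_{n_L-(m_L+j_L)})-\hat{C}(\underbrace{\bar{F}_1(t)}_{m_1+j_1},\underbrace{1}_{n_1-(m_1+j_1)},\dots,\underbrace{\bar{F}_i(t)}_{m_i+j_i},\bar{F}_i(t+\delta),\underbrace{1}_{n_i-(m_i+j_i+1)}, \dots,\underbrace{\bar{F}_L(t)}_{m_L+j_L},\underbrace{1}_{n_L-(m_L+j_L)})\Big].$$
   Context: In the arguments of $\hat C$, the notation $\underbrace{u}_{m}$ denotes $m$ consecutive repetitions of the value $u$; the arguments are listed block by block, the $k$th block consisting of the $n_k$ arguments associated with the components of type $k$ (by within-type exchangeability, the order of arguments inside a block is immaterial). *)

(* Defs.v *)
From HB Require Import structures.
From mathcomp Require Import all_boot all_order all_algebra.
From mathcomp Require Import all_classical all_reals all_analysis.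
Set Implicit Arguments. Unset Strict Implicit. Unset Printing Implicit Defensive.
Import Order.TTheory GRing.Theory Num.Theory.
Local Open Scope ring_scope.

Definition copula (R : realType) (I : finType) (C : (I -> R) -> R) : Prop :=
  [/\ (forall u : I -> R, (forall x, 0 <= u x <= 1) ->
          (exists x, u x = 0) -> C u = 0),
      (forall (u : I -> R) (x : I), (forall y, 0 <= u y <= 1) ->
          (forall y, y != x -> u y = 1) -> C u = u x) &
      (forall a b : I -> R, (forall x, 0 <= a x /\ a x <= b x /\ b x <= 1) ->
          0 <= \sum_(S : {set I}) (-1) ^+ #|~: S| *
                 C (fun x => if x \in S then b x else a x))].

(* Main.v *)
Require Import Defs.
From HB Require Import structures.
From mathcomp Require Import all_boot all_order all_algebra.
From mathcomp Require Import all_classical all_reals all_analysis.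
From mathcomp Require Import perm zify.
Import Order.TTheory GRing.Theory Num.Theory.
Local Open Scope ring_scope.
Local Open Scope classical_set_scope.


Lemma meas_forall d (Omega : measurableType d) (Y : finType) (C : Y -> set Omega) :
  (forall y, measurable (C y)) -> measurable [set w | forall y, C y w].
Proof.
move=> mC.
have -> : [set w | forall y, C y w] = \bigcap_(y in [set: Y]) C y.
  by apply/seteqP; split => w /= H y //; apply: H.
by apply: fin_bigcap_measurable => //; exact: finite_finset.
Qed.

Lemma meas_forall_in d (Omega : measurableType d) (Y : finType) (A : {set Y}) (C : Y -> set Omega) :
  (forall y, measurable (C y)) -> measurable [set w | forall y, y \in A -> C y w].
Proof.
move=> mC.
have -> : [set w | forall y, y \in A -> C y w] = \bigcap_(y in [set y | y \in A]) C y.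
  by apply/seteqP; split => w /= H y //; apply: H.
by apply: fin_bigcap_measurable => //; exact: finite_finset.
Qed.

Lemma sum_split (R : nmodType) (Y : finType) (y : Y) (A : {set Y}) (F : {set Y} -> R) :
  y \notin A ->
  \sum_(S : {set Y} | S \subset y |: A) F S = \sum_(S : {set Y} | S \subset A) F S + \sum_(S : {set Y} | S \subset A) F (y |: S).
Proof.
move=> yA.
rewrite (bigID (fun S : {set Y} => y \in S)) /= addrC; congr (_ + _).
  apply: eq_bigl => S; rewrite -[in RHS](setU1K yA) subsetD1.
  by rewrite andbC.
rewrite (reindex_onto (fun S => y |: S) (fun S => S :\ y)) /=; last first.
  by move=> S /andP[_ yS]; rewrite finset.setD1K.
apply: eq_bigl => S.
apply/idP/idP.
  move=> /andP[/andP[sub _] /eqP E].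
  have yS : y \notin S by rewrite -E !inE eqxx.
  rewrite -(setU1K yA) subsetD1 yS andbT.
  by apply/fintype.subsetP => z zS; apply: (fintype.subsetP sub); rewrite in_setU1 zS orbT.
move=> SA.
have yS : y \notin S by apply/negP => /(fintype.subsetP SA); rewrite (negbTE yA).
by rewrite finset.setUS // !inE eqxx /= setU1K.
Qed.

Lemma P_fin d (Omega : measurableType d) (R : realType) (P : probability Omega R) (X : set Omega) :
  measurable X -> P X \is a fin_num.
Proof. move=> mX; exact: fin_num_measure. Qed.

Lemma muD d (Omega : measurableType d) (R : realType) (P : probability Omega R) (X Z : set Omega) :
  measurable X -> measurable Z -> fine (P (X `\` Z)) = fine (P X) - fine (P (X `&` Z)).
Proof.
move=> mX mZ.
have fX : P X \is a fin_num by exact: P_fin.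
rewrite measureD //; last by rewrite ltey_eq fX.
by rewrite fineB //; apply: P_fin; exact: measurableI.
Qed.

Lemma ie d (Omega : measurableType d) (R : realType) (P : probability Omega R)
  (Y : finType) (B : Y -> set Omega) :
  (forall y, measurable (B y)) ->
  forall (A : {set Y}) (E : set Omega), measurable E ->
  fine (P (E `&` [set w | forall y, y \in A -> ~ B y w])) =
  \sum_(S : {set Y} | S \subset A)
     (-1) ^+ #|S| * fine (P (E `&` [set w | forall y, y \in S -> B y w])).
Proof.
move=> mB A.
elim: {A}_.+1 {-2}A (ltnSn #|A|) => // N IH A; rewrite ltnS => cardA E mE.
case: (set_0Vmem A) => [-> | [y yA]].
  rewrite (big_pred1 finset.set0); last by move=> S; rewrite finset.subset0.
  rewrite cards0 expr0 mul1r; congr (fine (P _)).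
  by apply/seteqP; split => w [Ew _]; split => // z; rewrite inE.
have yA' : y \notin A :\ y by rewrite setD11.
have cA' : (#|A :\ y| < N)%N.
  by move: cardA; rewrite (cardsD1 y A) yA.
have AE : A = y |: (A :\ y) by rewrite finset.setD1K.
have mN : forall (Z : {set Y}), measurable [set w | forall z, z \in Z -> ~ B z w].
  move=> Z; apply: (@meas_forall_in d Omega Y Z (fun z w => ~ B z w)) => z.
  exact: measurableC.
rewrite AE sum_split //.
have -> : E `&` [set w | forall z, z \in y |: (A :\ y) -> ~ B z w] =
   (E `&` [set w | forall z, z \in A :\ y -> ~ B z w]) `\` B y.
  apply/seteqP; split => w /=.
    move=> [Ew H]; split; first split => //.
      by move=> z zA; apply: H; rewrite in_setU1 zA orbT.
    by apply: H; rewrite setU11.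
  move=> [[Ew H] Hy]; split => // z; rewrite in_setU1 => /orP[/eqP -> //|].
  exact: H.
rewrite muD //; last exact: measurableI.
have -> : (E `&` [set w | forall z, z \in A :\ y -> ~ B z w]) `&` B y =
   (E `&` B y) `&` [set w | forall z, z \in A :\ y -> ~ B z w].
  by rewrite setIAC.
rewrite (IH _ cA' E mE) (IH _ cA' (E `&` B y)); last exact: measurableI.
rewrite -sumrN; congr (_ + _); apply: eq_bigr => S SA.
have yS : y \notin S.
  by apply/negP => /(fintype.subsetP SA); rewrite (negbTE yA').
rewrite cardsU1 yS add1n exprS mulN1r mulNr; congr (- (_ * _)).
congr (fine (P _)).
apply/seteqP; split => w /=.
  move=> [[Ew By] H]; split => // z; rewrite in_setU1 => /orP[/eqP -> //|].
  exact: H.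
move=> [Ew H]; split; first split => //.
  by apply: H; rewrite setU11.
by move=> z zS; apply: H; rewrite in_setU1 zS orbT.
Qed.


Lemma map_cst_in (T : eqType) U (f : T -> U) (a : U) (s : seq T) :
  {in s, forall x, f x = a} -> map f s = nseq (size s) a.
Proof.
elim: s => //= x s IH H; rewrite H ?mem_head // IH // => y ys.
by apply: H; rewrite in_cons ys orbT.
Qed.

Lemma perm01 (f : nat -> bool) (s : seq nat) :
  perm_eq (map (fun j => if f j then 1 else 0)%N s)
          (nseq (count f s) 1%N ++ nseq (size s - count f s) 0%N).
Proof.
elim: s => //= a s IH.
case: (f a) => /=.
  by rewrite add1n subSS perm_cons.
have cs := count_size f s.
rewrite add0n subSn //=.
rewrite perm_sym -cat1s perm_catCA /= perm_cons perm_sym //.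
Qed.

Lemma lists_perm (e : bool) (m bnd c : nat) (f : nat -> bool) :
  count f (iota 0 bnd) = c ->
  perm_eq
   (map (fun p => if e && (p == 0) then 2 else if p < m + e then 1
                  else if f (p - (m + e)) then 1 else 0)%N (iota 0 (m + e + bnd)))
   (map (fun p => if e && (p == m + c) then 2 else if p < m + c then 1 else 0)%N
        (iota 0 (m + e + bnd))).
Proof.
move=> cE.
have cb : (c <= bnd)%N by rewrite -cE; have := count_size f (iota 0 bnd); rewrite size_iota.
set lF := (fun p => _).
set lC := (fun p => _).
have -> : map lC (iota 0 (m + e + bnd)) =
    nseq (m + c) 1%N ++ nseq e 2%N ++ nseq (bnd - c) 0%N.
  have -> : (m + e + bnd = (m + c) + (e + (bnd - c)))%N by lia.
  rewrite (iotaD 0 (m + c)) (iotaD (0 + (m + c)) e) !map_cat.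
  rewrite (@map_cst_in _ _ _ 1%N); last first.
    move=> p; rewrite mem_iota /lC => /andP[_ pl].
    have -> : (p < m + c)%N by lia.
    by case: (e) => //=; rewrite ltn_eqF //; lia.
  rewrite (@map_cst_in _ _ _ 2%N (iota (0 + (m + c)) e)); last first.
    move=> p; rewrite mem_iota /lC; case: (e) => /= /andP[p1 p2]; last by lia.
    have -> : p = (m + c)%N by lia.
    by rewrite eqxx.
  rewrite (@map_cst_in _ _ _ 0%N); last first.
    move=> p; rewrite mem_iota /lC => /andP[p1 p2].
    case: (e) p1 p2 => /= p1 p2.
      have h1 : (p < m + c)%N = false by lia.
      have h2 : (p == m + c)%N = false by apply/eqP; lia.
      by rewrite h1 h2.
    have h1 : (p < m + c)%N = false by lia.
    by rewrite h1.
  by rewrite !size_iota.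
rewrite iotaD map_cat.
have -> : map lF (iota 0 (m + e)) = nseq e 2%N ++ nseq m 1%N.
  rewrite /lF; case: (e) => /=.
    rewrite (_ : iota 0 (m + 1) = 0%N :: iota 1 m); last by rewrite addn1.
    rewrite /= (@map_cst_in _ _ _ 1%N) ?size_iota //.
    move=> p; rewrite mem_iota => /andP[p1 p2].
    have h1 : (p == 0)%N = false by apply/eqP; lia.
    have h2 : (p < m + 1)%N by lia.
    by rewrite h1 h2.
  rewrite (@map_cst_in _ _ _ 1%N) ?size_iota ?addn0 //.
  move=> p; rewrite mem_iota => /andP[p1 p2].
  have h2 : (p < m)%N by lia.
  by rewrite ?addn0 h2.
have -> : map lF (iota (0 + (m + e)) bnd) = map (fun j => if f j then 1 else 0)%N (iota 0 bnd).
  rewrite (_ : iota (0 + (m + e)) bnd = map (addn (m + e)) (iota 0 bnd)); last by rewrite -iotaDl addn0 add0n.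
  rewrite -map_comp.
  apply/eq_in_map => j _; rewrite /lF /=.
  have -> : e && (m + e + j == 0)%N = false by case: (e) => //=; rewrite addn1.
  have -> : (m + e + j < m + e)%N = false by lia.
  by rewrite addKn.
rewrite (perm_catl _ (perm01 f (iota 0 bnd))) cE size_iota.
rewrite -catA (catA (nseq m 1%N)) -nseqD perm_catCA.
by [].
Qed.


Lemma perm_of_seq (N : nat) (l1 l2 : nat -> nat) :
  perm_eq (map l1 (iota 0 N)) (map l2 (iota 0 N)) ->
  exists s : {perm 'I_N}, forall p : 'I_N, l1 p = l2 (s p).
Proof.
move=> H.
have H' : perm_eq (map (l1 \o val) (enum 'I_N)) [tuple l2 (val p) | p < N].
  by rewrite /= map_comp val_enum_ord (map_comp l2 val) val_enum_ord.
have /tuple_permP[s Hs] := H'.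
exists s => p.
have := congr1 (fun z => nth 0%N z p) Hs.
rewrite /= (nth_map p) ?size_enum_ord // nth_ord_enum /=.
by rewrite (nth_map p) ?size_enum_ord // nth_ord_enum tnth_mktuple.
Qed.

Lemma exch d (Omega : measurableType d) (R : realType) (P : probability Omega R)
  (L : nat) (n : 'I_L -> nat) (T : {k : 'I_L & 'I_(n k)} -> Omega -> R)
  (hexch : forall (sg : forall k : 'I_L, {perm 'I_(n k)})
                  (s : {k : 'I_L & 'I_(n k)} -> R),
      P [set w | forall x, s x < T (Tagged (fun k => 'I_(n k)) (sg (tag x) (tagged x))) w]
      = P [set w | forall x, s x < T x w])
  (v : nat -> R) (l1 l2 : 'I_L -> nat -> nat) :
  (forall k, perm_eq (map (l1 k) (iota 0 (n k))) (map (l2 k) (iota 0 (n k)))) ->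
  P [set w | forall x, v (l1 (tag x) (nat_of_ord (tagged x))) < T x w] =
  P [set w | forall x, v (l2 (tag x) (nat_of_ord (tagged x))) < T x w].
Proof.
move=> H.
pose sg := fun k => odflt 1%g [pick s : {perm 'I_(n k)} | [forall p : 'I_(n k), l1 k p == l2 k (s p)]].
have Hsg : forall k (p : 'I_(n k)), l1 k p = l2 k (sg k p).
  move=> k p; rewrite /sg; case: pickP => [s /forallP /(_ p) /eqP //|].
  have [s Hs] := perm_of_seq _ _ _ (H k).
  by move=> /(_ s) /forallP; case; move=> q; rewrite Hs.
rewrite -(hexch sg); congr (P _).
apply/seteqP; split => w /= Hw.
  case=> k p; have := Hw (Tagged (fun k => 'I_(n k)) ((sg k)^-1%g p)).
  by rewrite /= Hsg permKV.
case=> k p /=; rewrite Hsg.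
exact: (Hw (Tagged (fun k => 'I_(n k)) (sg k p))).
Qed.


Definition cardsF (L : nat) (b : 'I_L -> nat) (F : {dffun forall k : 'I_L, {set 'I_(b k)}}) :
  {dffun forall k : 'I_L, 'I_(b k).+1} :=
  finfun (fun k => inord #|F k| : 'I_(b k).+1).

Arguments cardsF {L b}.

Lemma cardsFE {L b} F k : nat_of_ord (@cardsF L b F k) = #|F k|.
Proof.
rewrite /cardsF ffunE inordK // ltnS.
by have := max_card (F k); rewrite card_ord.
Qed.

Lemma group_sum (R : comNzRingType) (L : nat) (b : 'I_L -> nat)
  (Phi : {dffun forall k : 'I_L, 'I_(b k).+1} -> R) :
  \sum_(F : {dffun forall k : 'I_L, {set 'I_(b k)}})
     (-1) ^+ (\sum_(k < L) #|F k|)%N * Phi (cardsF F)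
  = \sum_(J : {dffun forall k : 'I_L, 'I_(b k).+1})
     (-1) ^+ (\sum_(k < L) nat_of_ord (J k))%N *
     (\prod_(k < L) ('C(b k, J k))%:R) * Phi J.
Proof.
rewrite (partition_big (@cardsF L b) predT) //=.
apply: eq_bigr => J _.
rewrite (eq_bigr (fun=> (-1) ^+ (\sum_(k < L) nat_of_ord (J k))%N * Phi J)); last first.
  move=> F /eqP <-; congr (_ ^+ _ * _).
  by apply: eq_bigr => k _; rewrite cardsFE.
rewrite sumr_const mulrAC -natr_prod mulr_natr; congr (_ *+ _).
transitivity #|(family (fun k : 'I_L => [pred A : {set 'I_(b k)} | #|A| == J k]) : simpl_pred {dffun forall k : 'I_L, {set 'I_(b k)}})|.
  apply: eq_card => F.
  apply/(@eqP _ (cardsF F) J)/familyP => [<- k|H]; first by rewrite inE cardsFE.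
  apply/ffunP => k; apply/val_inj => /=; rewrite cardsFE.
  by have := H k; rewrite inE => /eqP.
rewrite card_family foldrE big_map big_enum /=.
apply: eq_big => // k _.
have := card_draws 'I_(b k) (J k); rewrite cardsE card_ord => <-.
by [].
Qed.


Lemma count_set (b : nat) (A : {set 'I_b}) :
  count (fun j => [exists j' : 'I_b, (j' \in A) && (nat_of_ord j' == j)]) (iota 0 b) = #|A|.
Proof.
rewrite -val_enum_ord count_map.
rewrite (eq_count (a2 := mem A)); last first.
  move=> j /=; apply/existsP/idP => [[j' /andP[jA /eqP /val_inj <-]] //|jA].
  by exists j; rewrite jA eqxx.
by rewrite enumT -size_filter cardE.
Qed.

Lemma meas_gt d (Omega : measurableType d) (R : realType) (P : probability Omega R)
  (f : {RV P >-> R}) (s : R) : measurable [set w | s < f w].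
Proof.
have -> : [set w | s < f w] = f @^-1` `]s, +oo[.
  by apply/seteqP; split => w /=; rewrite in_itv /= andbT.
exact: measurable_funPTI.
Qed.

Theorem theorem1 (R : realType) (d : measure_display) (Omega : measurableType d)
  (P : probability Omega R) (L : nat) (n : 'I_L -> nat)
  (T : {k : 'I_L & 'I_(n k)} -> {RV P >-> R})
  (Fbar : 'I_L -> R -> R) (Chat : ({k : 'I_L & 'I_(n k)} -> R) -> R)
  (hT0 : forall x w, 0 <= T x w)
  (hF : forall (x : {k : 'I_L & 'I_(n k)}) (s : R),
      P [set w | s < T x w] = (Fbar (tag x) s)%:E)
  (hexch : forall (sg : forall k : 'I_L, {perm 'I_(n k)})
                  (s : {k : 'I_L & 'I_(n k)} -> R),
      P [set w | forall x, s x < T (Tagged (fun k => 'I_(n k)) (sg (tag x) (tagged x))) w]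
      = P [set w | forall x, s x < T x w])
  (hC : copula Chat)
  (hrep : forall s : {k : 'I_L & 'I_(n k)} -> R,
      P [set w | forall x, s x < T x w] = (Chat (fun x => Fbar (tag x) (s x)))%:E)
  (i : 'I_L) (m : 'I_L -> nat)
  (hm : forall k, k != i -> (m k <= n k)%N) (hmi : (m i < n i)%N)
  (t delta : R) (ht : 0 <= t) (hdelta : 0 < delta) :
  let bnd := fun k : 'I_L => (n k - m k - (k == i))%N in
  P [set w | forall x : {k : 'I_L & 'I_(n k)},
        if tag x == i then
          (if nat_of_ord (tagged x) == 0%N then t < T x w <= t + delta
           else if (nat_of_ord (tagged x) <= m i)%N then t < T x w
           else T x w <= t)
        else
          (if (nat_of_ord (tagged x) < m (tag x))%N then t < T x w
           else T x w <= t)]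
  = (\sum_(J : {dffun forall k : 'I_L, 'I_(bnd k).+1})
       (-1) ^+ (\sum_(k < L) nat_of_ord (J k))%N *
       (\prod_(k < L) ('C(bnd k, J k))%:R) *
       (Chat (fun x => if (nat_of_ord (tagged x) < m (tag x) + J (tag x) + (tag x == i))%N
                       then Fbar (tag x) t else 1)
        - Chat (fun x => if tag x == i then
                   (if (nat_of_ord (tagged x) < m i + J i)%N then Fbar i t
                    else if nat_of_ord (tagged x) == (m i + J i)%N then Fbar i (t + delta)
                    else 1)
                 else if (nat_of_ord (tagged x) < m (tag x) + J (tag x))%N
                      then Fbar (tag x) t else 1)))%:E.
Proof.
move=> bnd.
have n0 : (0 < n i)%N by lia.
pose off := fun k : 'I_L => (m k + (k == i))%N.
have offb : forall k, (off k + bnd k = n k)%N.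
  move=> k; rewrite /off /bnd; case: (boolP (k == i)) => [/eqP ->|ki].
    by rewrite /=; lia.
  by rewrite /=; have := hm k ki; lia.
have ltpos : forall k (j : 'I_(bnd k)), (off k + j < n k)%N.
  by move=> k j; rewrite -(offb k) ltn_add2l.
pose Y := {k : 'I_L & 'I_(bnd k)}.
pose posY := fun y : Y => Tagged (fun k => 'I_(n k)) (Ordinal (ltpos (tag y) (tagged y))).
have posYE : forall k (p : 'I_(n k)) (h : (p - off k < bnd k)%N), (off k <= p)%N ->
    posY (Tagged (fun k => 'I_(bnd k)) (Ordinal h)) = Tagged (fun k => 'I_(n k)) p.
  move=> k p h op; rewrite /posY /=; congr Tagged; apply: val_inj => /=; lia.
pose x0 := Tagged (fun k => 'I_(n k)) (Ordinal n0).
have F1 : forall x : {k : 'I_L & 'I_(n k)}, Fbar (tag x) (-1) = 1.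
  move=> x.
  have E : [set w | -1 < T x w] = setT.
    apply/seteqP; split => w //= _; apply: (lt_le_trans _ (hT0 x w)).
    by rewrite ltrN10.
  by have := hF x (-1); rewrite E probability_setT => -[].
pose v := fun (a : R) (lab : nat) => if lab == 2%N then a else if lab == 1%N then t else -1.
pose lE := fun (k : 'I_L) (p : nat) =>
  (if (k == i) && (p == 0) then 2 else if p < off k then 1 else 0)%N.
pose Ea := fun a => [set w | forall x, v a (lE (tag x) (nat_of_ord (tagged x))) < T x w].
pose B := fun y : Y => [set w | t < T (posY y) w].
pose AT : {set Y} := [set: Y]%SET.
pose Ev := fun a => Ea a `&` [set w | forall y, y \in AT -> ~ B y w].
have condE : forall (k : 'I_L) (p : nat) (A0 B0 C0 : bool),
    (if k == i then (if p == 0%N then A0 else if (p <= m i)%N then B0 else C0)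
     else (if (p < m k)%N then B0 else C0)) =
    (if (k == i) && (p == 0%N) then A0 else if (p < off k)%N then B0 else C0).
  move=> k p A0 B0 C0; rewrite /off; case: (eqVneq k i) => [->|nki] /=.
    by rewrite ?eqxx /=; case: (p == 0%N) => //=; rewrite addn1 ltnS.
  by rewrite addn0.
have Dchar : forall w, (forall y : Y, ~ t < T (posY y) w) <->
    (forall x : {k : 'I_L & 'I_(n k)}, (off (tag x) <= tagged x)%N -> T x w <= t).
  move=> w; split.
    move=> H [k p] /= hp.
    have h : (p - off k < bnd k)%N by have := offb k; have := ltn_ord p; lia.
    have := H (Tagged (fun k => 'I_(bnd k)) (Ordinal h)).
    rewrite posYE // => /negP; by rewrite -leNgt.
  move=> H [k j] /=; apply/negP; rewrite -leNgt; apply: H => /=; lia.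
have x0E : forall x : {k : 'I_L & 'I_(n k)}, (tag x == i) && (nat_of_ord (tagged x) == 0%N) -> x = x0.
  case=> k p /= /andP[/eqP ek /eqP p0]; subst k; rewrite /x0; congr Tagged; exact: val_inj.
have vE : forall a b lab, lab != 2%N -> v a lab = v b lab.
  by move=> a b lab; rewrite /v => /negbTE ->.
have mEa : forall a, measurable (Ea a).
  move=> a; apply: (@meas_forall d Omega _ (fun x => [set w | v a (lE (tag x) (nat_of_ord (tagged x))) < T x w])).
  move=> x; exact: meas_gt.
have mB : forall y, measurable (B y) by move=> y; exact: meas_gt.
have mEv : forall a, measurable (Ev a).
  move=> a; apply: measurableI => //.
  apply: (@meas_forall_in d Omega Y AT (fun y w => ~ B y w)) => y.
  exact: measurableC.
match goal with |- _ ?S = _ => set LS := S end.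
have -> : LS = Ev t `\` Ev (t + delta).
  apply/seteqP; split => w /=.
    move=> H; split.
      split.
        move=> x; have := H x; rewrite condE /lE /v.
        case: ifP => [_ /andP[] //|_].
        case: ifP => [_ //|_ _] /=.
        by apply: (lt_le_trans _ (hT0 x w)); rewrite ltrN10.
      suff HD : forall y : Y, ~ t < T (posY y) w by move=> y _; exact: HD.
      apply/(Dchar w) => x hx; have := H x; rewrite condE.
      have -> : (tag x == i) && (nat_of_ord (tagged x) == 0%N) = false.
        apply/negbTE/negP => /andP[ek /eqP p0]; move: hx; rewrite /off ek p0 /=; lia.
      by rewrite ltnNge hx.
    move=> [H1 _]; have := H1 x0; have := H x0; rewrite condE /lE /v /= eqxx /=.
    by move=> /andP[_ h1] h2; move: (lt_le_trans h2 h1); rewrite ltxx.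
  move=> [[H1 H2] H3] x; rewrite condE.
  case: ifP => hx0.
    have := H1 x; rewrite /lE hx0 /v /= => ->; rewrite /=.
    rewrite leNgt; apply/negP => Hlt; apply: H3; split => //.
    move=> x'; case: (boolP ((tag x' == i) && (nat_of_ord (tagged x') == 0%N))) => hx'.
      by rewrite /lE hx' /v /= (x0E _ hx') -(x0E _ hx0).
    rewrite (vE _ t); first exact: H1.
    by rewrite /lE (negbTE hx'); case: ifP.
  case: ifP => hU.
    by have := H1 x; rewrite /lE hx0 hU /v /=.
  apply: (proj1 (Dchar w)) => [y|]; first exact: H2.
  by rewrite leqNgt hU.
have fin : forall Z, measurable Z -> P Z = (fine (P Z))%:E.
  by move=> Z mZ; rewrite fineK //; exact: P_fin.
rewrite fin; last exact: measurableD.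
congr (_%:E).
rewrite muD // setIidr; last first.
  move=> w [H1 H2]; split => // x; have := H1 x; rewrite /v.
  case: ifP => // _ h; apply: lt_trans h; by rewrite ltrDl.
pose lC := fun (J : {dffun forall k : 'I_L, 'I_(bnd k).+1}) (k : 'I_L) (p : nat) =>
  (if (k == i) && (p == m k + J k) then 2 else if p < m k + J k then 1 else 0)%N.
pose W := {dffun forall k : 'I_L, {set 'I_(bnd k)}}.
pose fF := fun (F : W) (k : 'I_L) (j : nat) =>
  [exists j' : 'I_(bnd k), (j' \in F k) && (nat_of_ord j' == j)].
pose lFam := fun (F : W) (k : 'I_L) (p : nat) =>
  (if (k == i) && (p == 0) then 2 else if p < off k then 1
   else if fF F k (p - off k) then 1 else 0)%N.
pose toSet := fun F : W => [set y : Y | tagged y \in F (tag y)]%SET.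
pose ofSet := fun S : {set Y} =>
  (finfun (fun k => [set j : 'I_(bnd k) | Tagged (fun k => 'I_(bnd k)) j \in S]%SET) : W).
have bij : bijective toSet.
  exists ofSet.
    by move=> F; apply/ffunP => k; rewrite ffunE; apply/setP => j; rewrite !inE /=.
  by move=> S; apply/setP => -[k j]; rewrite !inE ffunE inE.
have cardT : forall F, #|toSet F| = (\sum_(k < L) #|F k|)%N.
  move=> F; rewrite -sum1_card.
  rewrite (eq_bigl (fun p : Y => true && (tagged p \in F (tag p)))); last by move=> y; rewrite inE.
  rewrite -(sig_big_dep (fun k => true) (fun k j => j \in F k) (fun _ _ => 1%N)).
  by apply: eq_bigr => k _; rewrite sum1_card.
have key : forall a, fine (P (Ev a)) =
   \sum_(J : {dffun forall k : 'I_L, 'I_(bnd k).+1})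
       (-1) ^+ (\sum_(k < L) nat_of_ord (J k))%N *
       (\prod_(k < L) ('C(bnd k, J k))%:R) *
       Chat (fun x => Fbar (tag x) (v a (lC J (tag x) (nat_of_ord (tagged x))))).
  move=> a.
  rewrite /Ev (ie _ _ _ P _ B mB AT (Ea a) (mEa a)).
  rewrite (eq_bigl (fun _ => true)); last by move=> S; exact: finset.subsetT.
  rewrite (reindex toSet); last exact: onW_bij.
  transitivity (\sum_(F : W) (-1) ^+ (\sum_(k < L) #|F k|)%N *
     (fun J => Chat (fun x => Fbar (tag x) (v a (lC J (tag x) (nat_of_ord (tagged x)))))) (cardsF F)); last first.
    exact: group_sum.
  apply: eq_bigr => F _; rewrite cardT; congr (_ * _).
  have -> : Ea a `&` [set w | forall y, y \in toSet F -> B y w] =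
      [set w | forall x, v a (lFam F (tag x) (nat_of_ord (tagged x))) < T x w].
    apply/seteqP; split => w /=.
      move=> [H1 H2] [k p] /=; rewrite /lFam.
      case: ifP => hx0; first by have := H1 (Tagged _ p); rewrite /lE /= hx0.
      case: ifP => hU; first by have := H1 (Tagged _ p); rewrite /lE /= hx0 hU.
      case: ifP => hf; last by have := H1 (Tagged _ p); rewrite /lE /= hx0 hU.
      move/existsP: hf => [j' /andP[jF /eqP jE]].
      have := H2 (Tagged (fun k => 'I_(bnd k)) j'); rewrite inE /= => /(_ jF).
      rewrite /B /=. have -> : posY (Tagged (fun k => 'I_(bnd k)) j') = Tagged (fun k => 'I_(n k)) p.
        rewrite /posY; congr Tagged; apply: val_inj => /=; move: hU; rewrite jE; lia.
      by rewrite /v.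
    move=> H; split.
      move=> [k p] /=; have := H (Tagged _ p); rewrite /lFam /lE /=.
      case: ifP => // _; case: ifP => // _; case: ifP => // _ _.
      by rewrite /v /=; apply: (lt_le_trans _ (hT0 _ w)); rewrite ltrN10.
    move=> [k j]; rewrite inE /= => jF; have := H (posY (Tagged _ j)).
    rewrite /lFam /posY /=.
    have -> : (k == i) && (off k + j == 0)%N = false.
      apply/negbTE/negP => /andP[ki /eqP]; rewrite /off ki; lia.
    have -> : (off k + j < off k)%N = false by lia.
    have -> : fF F k (off k + j - off k)%N.
      by apply/existsP; exists j; rewrite jF addKn eqxx.
    by rewrite /v.
  rewrite (exch _ _ _ P L n (fun x w => T x w) hexch (v a) (lFam F) (lC (cardsF F))); last first.
    move=> k; rewrite -(offb k) /off /lC cardsFE.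
    exact: (lists_perm (k == i) (m k) (bnd k) #|F k| (fF F k) (count_set _ _)).
  by rewrite hrep.
rewrite !key -sumrB; apply: eq_bigr => J _; rewrite -mulrBr; congr (_ * (_ - _)).
  congr (Chat _); apply/funext => -[k p] /=; rewrite /v /lC.
  case: (boolP ((k == i) && (nat_of_ord p == (m k + J k)%N))) => [/andP[ki /eqP pe]|h1] /=.
    by rewrite ki pe addn1 ltnSn.
  case: (boolP (p < m k + J k)%N) => h2 /=.
    by rewrite (_ : (p < m k + J k + (k == i))%N) //; apply: (leq_trans h2); rewrite leq_addr.
  rewrite (F1 (Tagged _ p)).
  move: h1; case: (k == i) => /= h1.
    by rewrite addn1 ltnS leq_eqVlt (negbTE h1) (negbTE h2).
  by rewrite addn0 (negbTE h2).
congr (Chat _); apply/funext => -[k p] /=; rewrite /v /lC.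
case: (eqVneq k i) => [eki|nki].
  subst k; rewrite ?eqxx /=.
  case: (boolP (nat_of_ord p == (m i + J i)%N)) => [/eqP pe|h1] /=.
    by rewrite pe ltnn.
  rewrite ?(negbTE h1); case: (boolP (p < m i + J i)%N) => h2 //=.
  exact: (F1 (Tagged _ p)).
rewrite ?(negbTE nki) /=.
case: (boolP (p < m k + J k)%N) => h2 //=.
exact: (F1 (Tagged _ p)).
Qed.
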